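(* Fix integers $d\ge 2$ and $n$ with $d+2\leq n\leq 2d$. Every $n$-point spherical code $X$ in $S^{d-1}$ has no Tammes rattler.
   Context: $[n]=\{1,\ldots,n\}$. For a configuration $X=\{x_i\}_{i\in[n]}$ in the unit sphere $S^{d-1}\subseteq\mathbb{R}^d$, $\alpha(X):=\max_{i\neq j}\langle x_i,x_j\rangle$. A spherical code is an $n$-point configuration in $S^{d-1}$ minimizing $\alpha$. A Tammes rattler of $X$ is an index $j\in[n]$ with $\max_{i\in[n]\setminus\{j\}}\langle x_i,x_j\rangle<\alpha(X)$. *)

(* Defs.v *)
From mathcomp Require Import all_boot all_order all_algebra.
From mathcomp Require Import reals.
Set Implicit Arguments. Unset Strict Implicit. Unset Printing Implicit Defensive.
Import Order.TTheory GRing.Theory Num.Theory.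
Local Open Scope ring_scope.

Definition inner (R : realType) (d : nat) (x y : 'rV[R]_d) : R :=
  \sum_(k < d) x 0 k * y 0 k.

Definition on_sphere (R : realType) (d : nat) (x : 'rV[R]_d) : Prop :=
  inner x x = 1.

Definition sph_config (R : realType) (d n : nat) (X : 'I_n -> 'rV[R]_d) : Prop :=
  forall i, on_sphere (X i).

(* alpha(X) = max_{i <> j} <x_i, x_j>.  Inner products of unit vectors are
   >= -1, so -1 is a neutral seed for the max whenever n >= 2. *)
Definition alpha (R : realType) (d n : nat) (X : 'I_n -> 'rV[R]_d) : R :=
  \big[Num.max/(-1)]_(p : 'I_n * 'I_n | p.1 != p.2) inner (X p.1) (X p.2).

Definition spherical_code (R : realType) (d n : nat) (X : 'I_n -> 'rV[R]_d) : Prop :=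
  sph_config X /\
  forall Y : 'I_n -> 'rV[R]_d, sph_config Y -> alpha X <= alpha Y.

Definition tammes_rattler (R : realType) (d n : nat) (X : 'I_n -> 'rV[R]_d)
    (j : 'I_n) : Prop :=
  \big[Num.max/(-1)]_(i : 'I_n | i != j) inner (X i) (X j) < alpha X.

(* Main.v *)
Require Import Defs.
From mathcomp Require Import all_boot all_order all_algebra.
From mathcomp Require Import reals.
Local Open Scope ring_scope.
Import Order.TTheory GRing.Theory Num.Theory.

Section Aux.
Variable R : realType.

Lemma innerE d (x y : 'rV[R]_d) : inner x y = (x *m y^T) 0 0.
Proof. by rewrite /inner !mxE; apply: eq_bigr => k _; rewrite mxE. Qed.

Lemma inner_suml d I (r : seq I) (P : pred I) (a : I -> R) (y : I -> 'rV[R]_d) w :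
  inner (\sum_(i <- r | P i) a i *: y i) w = \sum_(i <- r | P i) a i * inner (y i) w.
Proof.
rewrite innerE mulmx_suml summxE; apply: eq_bigr => i _.
by rewrite -scalemxAl mxE innerE.
Qed.

Lemma innerC d (x y : 'rV[R]_d) : inner x y = inner y x.
Proof. by rewrite /inner; apply: eq_bigr => k _; rewrite mulrC. Qed.

Lemma inner_self_eq0 d (x : 'rV[R]_d) : inner x x <= 0 -> x = 0.
Proof.
move=> h.
have ge : forall k : 'I_d, true -> 0 <= x 0 k * x 0 k by move=> k _; rewrite -expr2 sqr_ge0.
have e0 : inner x x = 0 by apply/eqP; rewrite eq_le h sumr_ge0.
apply/rowP => k; rewrite mxE.
have := psumr_eq0P ge e0 (i:=k) isT.
by move/eqP; rewrite mulf_eq0 orbb => /eqP.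
Qed.

Lemma core m d (y : 'I_m -> 'rV[R]_d) (w : 'rV[R]_d) (c : 'I_m -> R) :
  (forall i k, i != k -> inner (y i) (y k) <= 0) ->
  (forall i, inner (y i) w < 0) ->
  \sum_i c i *: y i = 0 -> forall i, c i <= 0.
Proof.
move=> hyy hyw hs.
pose u := \sum_(i | 0 < c i) c i *: y i.
have hu : u = - \sum_(i | ~~ (0 < c i)) c i *: y i.
  move: hs; rewrite (bigID (fun i => 0 < c i)) /= => h.
  by apply/eqP; rewrite -addr_eq0 /u h.
have u0 : u = 0.
  apply: inner_self_eq0.
  rewrite {1}/u inner_suml sumr_le0 // => i ci.
  rewrite hu innerC -sumrN.
  have -> : \sum_(k | ~~ (0 < c k)) - (c k *: y k) = \sum_(k | ~~ (0 < c k)) (- c k) *: y k.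
    by apply: eq_bigr => k _; rewrite scaleNr.
  rewrite inner_suml; apply: mulr_ge0_le0; first exact: ltW.
  apply: sumr_le0 => k ck; apply: mulr_ge0_le0; first by rewrite oppr_ge0 leNgt.
  apply: hyy; apply/eqP => ek; move: ck; by rewrite ek ci.
move=> i; rewrite leNgt; apply/negP => ci.
have : inner u w < 0.
  rewrite /u inner_suml (bigD1 i) //=.
  apply: ltr_wnDr.
    apply: sumr_le0 => k /andP [ck _]; apply: mulr_ge0_le0; [exact: ltW | exact: ltW].
  by rewrite pmulr_rlt0 //; apply: hyw.
by rewrite u0 /inner big1 ?ltxx // => k _; rewrite mxE mul0r.
Qed.



Lemma inner_delta d (a : R) (p : 'I_d) (y : 'rV[R]_d) :
  inner (a *: delta_mx 0 p) y = a * y 0 p.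
Proof.
rewrite /inner (bigD1 p) //= big1 => [|k kp]; first by rewrite !mxE !eqxx /= addr0 mulr1.
by rewrite !mxE (negbTE kp) andbF mulr0 mul0r.
Qed.

Lemma modd i d : (d <= i)%N -> (i < 2 * d)%N -> (i %% d = i - d)%N.
Proof.
move=> h1 h2; rewrite -{1}(subnKC h1) modnDl modn_small //.
rewrite ltn_subLR //; by rewrite mul2n -addnn in h2.
Qed.

Lemma goodY d n : (2 <= d)%N -> (n <= 2 * d)%N ->
  exists Y : 'I_n -> 'rV[R]_d, sph_config Y /\ alpha Y <= 0.
Proof.
move=> hd hn.
have d0 : (0 < d)%N by apply: leq_trans hd.
pose s (i : 'I_n) : R := if (i < d)%N then 1 else -1.
pose Y (i : 'I_n) : 'rV[R]_d := s i *: delta_mx 0 (Ordinal (ltn_pmod i d0)).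
have hY : forall i k, inner (Y i) (Y k) = s i * (s k * ((i %% d)%N == (k %% d)%N)%:R).
  move=> i k; rewrite /Y inner_delta !mxE /=.
  by [].
exists Y; split.
  move=> i; rewrite /on_sphere hY eqxx mulr1 /s; by case: ifP; rewrite ?mulr1 ?mulrNN ?mulr1.
rewrite /alpha; apply: bigmax_le => //; first by rewrite lerN10.
move=> [i k] /= ik; rewrite hY.
case: eqP => e; last by rewrite !mulr0.
rewrite mulr1 /s.
have hi : (i < 2 * d)%N by apply: leq_trans (ltn_ord i) hn.
have hk : (k < 2 * d)%N by apply: leq_trans (ltn_ord k) hn.
case: ifP => i1; case: ifP => k1.
- by move: e ik; rewrite !modn_small // => e; rewrite -(inj_eq val_inj) /= e eqxx.
- by rewrite mul1r lerN10.
- by rewrite mulr1 lerN10.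
- have i2 : (d <= i)%N by rewrite leqNgt i1.
  have k2 : (d <= k)%N by rewrite leqNgt k1.
  move: e ik; rewrite !modd // => e; rewrite -(inj_eq val_inj) /=.
  have : (i - d + d = k - d + d)%N by rewrite e.
  by rewrite !subnK // => ->; rewrite eqxx.
Qed.

End Aux.

Theorem lemma9 (R : realType) (d n : nat) :
  (2 <= d)%N -> (d + 2 <= n)%N -> (n <= 2 * d)%N ->
  forall X : 'I_n -> 'rV[R]_d, spherical_code X ->
  forall j : 'I_n, ~ tammes_rattler X j.
Proof.
move=> hd hn1 hn2 X [hX hmin] j hr.
have [Y [hY aY]] := @goodY R d n hd hn2.
have aX : alpha X <= 0 := le_trans (hmin Y hY) aY.
have hij : forall i, i != j -> inner (X i) (X j) < 0.
  move=> i ij; apply: lt_le_trans aX; apply: le_lt_trans hr.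
  exact: (le_bigmax_cond _ (fun i => inner (X i) (X j)) ij).
have hpair : forall i k, i != k -> inner (X i) (X k) <= 0.
  move=> i k ik; apply: le_trans aX.
  exact: (le_bigmax_cond _ (fun p : 'I_n * 'I_n => inner (X p.1) (X p.2)) (j := (i, k)) ik).
pose B := \matrix_(i < n.-1) X (lift j i).
have nf : ~~ row_free B.
  rewrite /row_free; apply/negP => /eqP e.
  have h := rank_leq_col B; rewrite e in h; move: h hn1.
  move=> h1 h2; rewrite addn2 in h2.
  have h3 : n.-1.+1 = n by rewrite prednK // (leq_trans _ h2).
  move: h2; rewrite -h3 ltnS => h2.
  by have := leq_trans h2 h1; rewrite ltnn.
rewrite -kermx_eq0 in nf.
have [v /sub_kermxP hv v0] := rowV0Pn nf.
rewrite mulmx_sum_row in hv.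
have hv' : \sum_i v 0 i *: X (lift j i) = 0.
  by rewrite -[RHS]hv; apply: eq_bigr => i _; rewrite rowK.
have hyy : forall i k : 'I_n.-1, i != k -> inner (X (lift j i)) (X (lift j k)) <= 0.
  by move=> i k ik; apply: hpair; rewrite (inj_eq (@lift_inj _ j)).
have hyw : forall i : 'I_n.-1, inner (X (lift j i)) (X j) < 0.
  by move=> i; apply: hij; rewrite eq_sym neq_lift.
have h1 := @core R _ _ _ _ _ hyy hyw hv'.
have hv'' : \sum_i (- v 0 i) *: X (lift j i) = 0.
  transitivity (- \sum_i v 0 i *: X (lift j i)); last by rewrite hv' oppr0.
  by rewrite -sumrN; apply: eq_bigr => i _; rewrite scaleNr.
have h2 := @core R _ _ _ _ _ hyy hyw hv''.
move/eqP: v0; apply; apply/rowP => i; rewrite mxE.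
by apply/eqP; rewrite eq_le h1 -oppr_le0 h2.
Qed.
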